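(* Let $\phi: M_n\to M_n$ be a unital PPT map with $\phi\circ\phi=\phi$. Then the range $\phi(M_n)$ is an abelian C$^*$-algebra with respect to the product $a\ast b=\phi(ab)$ for $a,b\in\phi(M_n)$ (with the involution and norm inherited from $M_n$).
   Context: $M_n$ denotes the $n\times n$ complex matrices. A linear map is completely positive (CP) if $\phi\otimes \mathrm{id}_k$ is positive for all $k$. A CP map $\phi: M_n\to M_n$ is PPT if $T\circ\phi$ is CP, where $T$ is the transpose map on $M_n$. It is known (Choi–Effros) that the range of an idempotent unital CP map is a C$^*$-algebra under the product $a\ast b=\phi(ab)$. *)

(* Defs.v *)
From HB Require Import structures.
From mathcomp Require Import all_boot all_order all_algebra.
From mathcomp Require Import complex.
From mathcomp Require Import boolp classical_sets reals.
Set Implicit Arguments. Unset Strict Implicit. Unset Printing Implicit Defensive.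
Import Order.TTheory GRing.Theory Num.Theory.
Local Open Scope ring_scope.
Local Open Scope complex_scope.

Section Defs.
Variable R : realType.
Local Notation C := R[i].
Variable n : nat.

Definition adjmx (m p : nat) (A : 'M[C]_(m, p)) : 'M[C]_(p, m) :=
  map_mx (@conjc R) A^T.

(* A k x k block matrix with n x n blocks, i.e. an element of M_k(M_n),
   is positive (semidefinite) iff  sum_{i,j} v_i^* X_ij v_j >= 0 for every
   vector v = (v_1,...,v_k) of C^{kn}. In a numClosedField, 0 <= z means z is
   real and nonnegative. *)
Definition block_pos (k : nat) (X : 'I_k -> 'I_k -> 'M[C]_n) : Prop :=
  forall v : 'I_k -> 'cV[C]_n,
    0 <= \sum_(i < k) \sum_(j < k) (adjmx (v i) *m X i j *m v j) 0 0.

(* phi is completely positive: phi (x) id_k is positive for all k *)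
Definition completely_positive (phi : 'M[C]_n -> 'M[C]_n) : Prop :=
  forall (k : nat) (X : 'I_k -> 'I_k -> 'M[C]_n),
    block_pos X -> block_pos (fun i j => phi (X i j)).

Definition PPT_map (phi : 'M[C]_n -> 'M[C]_n) : Prop :=
  completely_positive phi /\ completely_positive (fun A => (phi A)^T).

Definition vnorm (x : 'cV[C]_n) : R :=
  Num.sqrt (\sum_(i < n) ComplexField.Normc.normc (x i 0) ^+ 2).

Definition opnorm (A : 'M[C]_n) : R :=
  sup [set r : R | exists x : 'cV[C]_n, vnorm x <= 1 /\ r = vnorm (A *m x)].

(* (S, mul, inv, nrm) is a C*-algebra: S a complex subspace of M_n carrying
   an associative bilinear product mul, a conjugate-linear antimultiplicative
   involution inv, and a submultiplicative norm nrm satisfying the C*-identity.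
   (Completeness is automatic, S being finite dimensional.) *)
Definition is_Cstar_algebra (S : 'M[C]_n -> Prop)
    (mul : 'M[C]_n -> 'M[C]_n -> 'M[C]_n) (inv : 'M[C]_n -> 'M[C]_n)
    (nrm : 'M[C]_n -> R) : Prop :=
  [/\ S 0,
      (forall a b, S a -> S b -> S (a + b)) &
      (forall (c : C) a, S a -> S (c *: a))] /\
  [/\ (forall a b, S a -> S b -> S (mul a b)),
      (forall a b c, S a -> S b -> S c -> mul (mul a b) c = mul a (mul b c)),
      (forall a b c, S a -> S b -> S c -> mul a (b + c) = mul a b + mul a c),
      (forall a b c, S a -> S b -> S c -> mul (a + b) c = mul a c + mul b c) &
      (forall (z : C) a b, S a -> S b ->
          mul (z *: a) b = z *: mul a b /\ mul a (z *: b) = z *: mul a b)] /\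
  [/\ (forall a, S a -> S (inv a)),
      (forall a, S a -> inv (inv a) = a),
      (forall a b, S a -> S b -> inv (a + b) = inv a + inv b),
      (forall (z : C) a, S a -> inv (z *: a) = conjc z *: inv a) &
      (forall a b, S a -> S b -> inv (mul a b) = mul (inv b) (inv a))] /\
  [/\ (forall a, S a -> 0 <= nrm a),
      (forall a, S a -> nrm a = 0 -> a = 0),
      (forall a b, S a -> S b -> nrm (a + b) <= nrm a + nrm b),
      (forall (z : C) a, S a -> nrm (z *: a) = ComplexField.Normc.normc z * nrm a) &
      ((forall a b, S a -> S b -> nrm (mul a b) <= nrm a * nrm b) /\
      (forall a, S a -> nrm (mul (inv a) a) = nrm a ^+ 2))].

Definition is_abelian (S : 'M[C]_n -> Prop)
    (mul : 'M[C]_n -> 'M[C]_n -> 'M[C]_n) : Prop :=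
  forall a b, S a -> S b -> mul a b = mul b a.

End Defs.

(* Main.v *)
Require Import Defs.
From HB Require Import structures.
From mathcomp Require Import all_boot all_order all_algebra.
From mathcomp Require Import complex.
From mathcomp Require Import boolp classical_sets reals.
From mathcomp Require Import ring lra.
Import Order.TTheory GRing.Theory Num.Theory.
Local Open Scope ring_scope.
Local Open Scope complex_scope.
Set Implicit Arguments. Unset Strict Implicit. Unset Printing Implicit Defensive.

Section Basics.
Variable R : realType.
Local Notation C := R[i].
Local Notation Re := (@complex.Re R).
Local Notation Im := (@complex.Im R).

Lemma adjmxE m p (A : 'M[C]_(m,p)) i j : adjmx A i j = conjc (A j i).
Proof. by rewrite /adjmx !mxE. Qed.

Lemma adjmxK m p (A : 'M[C]_(m,p)) : adjmx (adjmx A) = A.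
Proof. by apply/matrixP => i j; rewrite !adjmxE conjcK. Qed.

Lemma adjmxD m p (A B : 'M[C]_(m,p)) : adjmx (A + B) = adjmx A + adjmx B.
Proof. by apply/matrixP => i j; rewrite !adjmxE mxE [RHS]mxE !adjmxE rmorphD. Qed.

Lemma adjmxN m p (A : 'M[C]_(m,p)) : adjmx (- A) = - adjmx A.
Proof. by apply/matrixP => i j; rewrite !adjmxE mxE [RHS]mxE !adjmxE rmorphN. Qed.

Lemma adjmxB m p (A B : 'M[C]_(m,p)) : adjmx (A - B) = adjmx A - adjmx B.
Proof. by rewrite adjmxD adjmxN. Qed.

Lemma adjmxZ m p (z : C) (A : 'M[C]_(m,p)) : adjmx (z *: A) = conjc z *: adjmx A.
Proof. by apply/matrixP => i j; rewrite !adjmxE mxE [RHS]mxE !adjmxE rmorphM. Qed.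

Lemma adjmx0 m p : adjmx (0 : 'M[C]_(m,p)) = 0.
Proof. by apply/matrixP => i j; rewrite !adjmxE !mxE conjc0. Qed.

Lemma adjmxM m p q (A : 'M[C]_(m,p)) (B : 'M[C]_(p,q)) :
  adjmx (A *m B) = adjmx B *m adjmx A.
Proof.
apply/matrixP => i j; rewrite !adjmxE !mxE rmorph_sum; apply: eq_bigr => k _.
by rewrite rmorphM !adjmxE mulrC.
Qed.

Lemma adjmx1 m : adjmx (1%:M : 'M[C]_m) = 1%:M.
Proof.
apply/matrixP => i j; rewrite !adjmxE !mxE eq_sym.
by rewrite conjc_nat.
Qed.

Lemma adjmx_scal m (z : C) : adjmx (z%:M : 'M[C]_m) = (conjc z)%:M.
Proof. by apply/matrixP => i j; rewrite !adjmxE !mxE eq_sym rmorphMn. Qed.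

Lemma adjmx_inj m p : injective (@adjmx R m p).
Proof. by move=> A B h; rewrite -(adjmxK A) h adjmxK. Qed.


Lemma ReD (x y : C) : Re (x + y) = Re x + Re y. Proof. by case: x; case: y. Qed.
Lemma ImD (x y : C) : Im (x + y) = Im x + Im y. Proof. by case: x; case: y. Qed.
Lemma ReN (x : C) : Re (- x) = - Re x. Proof. by case: x. Qed.
Lemma ImN (x : C) : Im (- x) = - Im x. Proof. by case: x. Qed.
Lemma ReB (x y : C) : Re (x - y) = Re x - Re y. Proof. by rewrite ReD ReN. Qed.
Lemma ImB (x y : C) : Im (x - y) = Im x - Im y. Proof. by rewrite ImD ImN. Qed.
Lemma ReM (x y : C) : Re (x * y) = Re x * Re y - Im x * Im y. Proof. by case: x; case: y. Qed.
Lemma ImM (x y : C) : Im (x * y) = Re x * Im y + Im x * Re y. Proof. by case: x => a b; case: y => c d /=; rewrite addrC. Qed.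
Lemma ReR (a : R) : Re (a%:C) = a. Proof. by []. Qed.
Lemma ImR (a : R) : Im (a%:C) = 0. Proof. by []. Qed.
Lemma ReJ (x : C) : Re (conjc x) = Re x. Proof. by case: x. Qed.
Lemma ImJ (x : C) : Im (conjc x) = - Im x. Proof. by case: x. Qed.
Lemma Rei (x : C) : Re ('i * x) = - Im x. Proof. by case: x => a b /=; rewrite !mul0r !mul1r sub0r. Qed.
Lemma Imi (x : C) : Im ('i * x) = Re x. Proof. by case: x => a b /=; rewrite !mul0r !mul1r add0r. Qed.
Lemma Re_sum I (r : seq I) (P : pred I) (F : I -> C) :
  Re (\sum_(i <- r | P i) F i) = \sum_(i <- r | P i) Re (F i).
Proof. by elim/big_rec2: _ => // i y1 y2 _ <-; rewrite ReD. Qed.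
Lemma Im_sum I (r : seq I) (P : pred I) (F : I -> C) :
  Im (\sum_(i <- r | P i) F i) = \sum_(i <- r | P i) Im (F i).
Proof. by elim/big_rec2: _ => // i y1 y2 _ <-; rewrite ImD. Qed.

Lemma ge0C (z : C) : (0 <= z) <-> (Im z = 0 /\ 0 <= Re z).
Proof. by rewrite complex.lecE /=; split => [/andP[/eqP -> ->]|[-> ->]]; rewrite ?eqxx. Qed.

Lemma complex_eq (x y : C) : Re x = Re y -> Im x = Im y -> x = y.
Proof. by case: x => a b; case: y => c d /= -> ->. Qed.

Lemma conjcM_self (z : C) : conjc z * z = ((ComplexField.Normc.normc z) ^+ 2)%:C.
Proof.
case: z => a b; rewrite /ComplexField.Normc.normc sqr_sqrtr ?addr_ge0 ?sqr_ge0 //.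
apply: complex_eq => /=; rewrite ?expr2; first by rewrite mulNr opprK.
by rewrite mulNr mulrC addrN.
Qed.


Local Notation normc := (@ComplexField.Normc.normc R).

Lemma normc_ge0 (z : C) : 0 <= normc z.
Proof. by case: z => a b; rewrite /ComplexField.Normc.normc sqrtr_ge0. Qed.

Lemma normc_sq (z : C) : normc z ^+ 2 = Re z ^+ 2 + Im z ^+ 2.
Proof. by case: z => a b; rewrite /ComplexField.Normc.normc /= sqr_sqrtr ?addr_ge0 ?sqr_ge0. Qed.

Variable n : nat.
Local Notation M := 'M[C]_n.
Local Notation V := 'cV[C]_n.

Definition dot (u v : V) : C := (adjmx u *m v) 0 0.

Lemma dotE u v : dot u v = \sum_i conjc (u i 0) * v i 0.
Proof. by rewrite /dot mxE; apply: eq_bigr => i _; rewrite adjmxE. Qed.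

Lemma dotDr u v w : dot u (v + w) = dot u v + dot u w.
Proof. by rewrite !dotE -big_split; apply: eq_bigr => i _; rewrite mxE mulrDr. Qed.
Lemma dotDl u v w : dot (v + w) u = dot v u + dot w u.
Proof. by rewrite !dotE -big_split; apply: eq_bigr => i _; rewrite mxE rmorphD mulrDl. Qed.
Lemma dotZr u v (z : C) : dot u (z *: v) = z * dot u v.
Proof. by rewrite !dotE mulr_sumr; apply: eq_bigr => i _; rewrite mxE mulrCA. Qed.
Lemma dotZl u v (z : C) : dot (z *: v) u = conjc z * dot v u.
Proof. by rewrite !dotE mulr_sumr; apply: eq_bigr => i _; rewrite mxE rmorphM mulrA. Qed.
Lemma dotNr u v : dot u (- v) = - dot u v.
Proof. by rewrite -scaleN1r dotZr mulN1r. Qed.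
Lemma dotNl u v : dot (- v) u = - dot v u.
Proof. by rewrite -scaleN1r dotZl rmorphN1 mulN1r. Qed.
Lemma dotBr u v w : dot u (v - w) = dot u v - dot u w.
Proof. by rewrite dotDr dotNr. Qed.
Lemma dotBl u v w : dot (v - w) u = dot v u - dot w u.
Proof. by rewrite dotDl dotNl. Qed.
Lemma dot0r u : dot u 0 = 0.
Proof. by rewrite /dot mulmx0 mxE. Qed.
Lemma dot0l u : dot 0 u = 0.
Proof. by rewrite /dot adjmx0 mul0mx mxE. Qed.

Lemma dot_adj (A : M) u v : dot (A *m u) v = dot u (adjmx A *m v).
Proof. by rewrite /dot adjmxM mulmxA. Qed.
Lemma dot_adjr (A : M) u v : dot u (A *m v) = dot (adjmx A *m u) v.
Proof. by rewrite dot_adj adjmxK. Qed.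

Lemma dot_conj u v : conjc (dot u v) = dot v u.
Proof.
rewrite !dotE rmorph_sum; apply: eq_bigr => i _.
by rewrite rmorphM /= conjcK mulrC.
Qed.

Definition nn (u : V) : R := \sum_i normc (u i 0) ^+ 2.

Lemma nn_ge0 u : 0 <= nn u.
Proof. by apply: sumr_ge0 => i _; rewrite sqr_ge0. Qed.

Lemma dot_self u : dot u u = (nn u)%:C.
Proof.
rewrite dotE /nn rmorph_sum; apply: eq_bigr => i _.
by rewrite conjcM_self.
Qed.

Lemma nn_eq0 u : nn u = 0 -> u = 0.
Proof.
move=> /eqP; rewrite psumr_eq0 => [/allP h|i _]; last by rewrite sqr_ge0.
apply/matrixP => i j; rewrite ord1 mxE.
have /h /= := mem_index_enum i; rewrite sqrf_eq0 => /eqP.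
exact: ComplexField.Normc.eq0_normc.
Qed.

Lemma vnorm_nn (u : V) : vnorm u = Num.sqrt (nn u).
Proof. by []. Qed.

Lemma vnorm_ge0 (u : V) : 0 <= vnorm u.
Proof. exact: sqrtr_ge0. Qed.

Lemma vnorm_sq (u : V) : vnorm u ^+ 2 = nn u.
Proof. by rewrite vnorm_nn sqr_sqrtr ?nn_ge0. Qed.

Lemma vnorm_eq0 (u : V) : vnorm u = 0 -> u = 0.
Proof. by move=> h; apply: nn_eq0; rewrite -vnorm_sq h expr0n. Qed.

Lemma Re_dot_self u : Re (dot u u) = nn u.
Proof. by rewrite dot_self. Qed.
Lemma Im_dot_self u : Im (dot u u) = 0.
Proof. by rewrite dot_self. Qed.

Lemma nn0 : nn (0 : V) = 0.
Proof. by apply: big1 => i _; rewrite mxE; rewrite ComplexField.Normc.normc0 expr0n. Qed.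
Lemma vnorm0 : vnorm (0 : V) = 0.
Proof. by rewrite vnorm_nn nn0 sqrtr0. Qed.


Lemma disc (a b c : R) : 0 <= c ->
  (forall t, 0 <= a + 2 * b * t + c * t ^+ 2) -> b ^+ 2 <= a * c.
Proof.
move=> c0 h; have [c_gt0|cle0] := ltrP 0 c.
  have := h (- b / c).
  have -> : a + 2 * b * (- b / c) + c * (- b / c) ^+ 2 = (a * c - b ^+ 2) / c.
    by field; rewrite gt_eqF.
  by rewrite pmulr_lge0 ?invr_gt0 // subr_ge0.
have c0' : c = 0 by apply/eqP; rewrite eq_le cle0 c0.
subst c; have [b0|bn0] := eqVneq b 0; first by rewrite b0 expr0n mulr0.
have := h (- (a + 1) / (2 * b)).
have -> : a + 2 * b * (- (a + 1) / (2 * b)) + 0 * (- (a + 1) / (2 * b)) ^+ 2 = -1.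
  by field.
by rewrite oppr_ge0 ler10.
Qed.


Lemma ReRM (s : R) (x : C) : Re (s%:C * x) = s * Re x.
Proof. by rewrite ReM /= mul0r subr0. Qed.
Lemma ImRM (s : R) (x : C) : Im (s%:C * x) = s * Im x.
Proof. by rewrite ImM /= mul0r addr0. Qed.

Lemma dot_expand (u w : V) (z : C) :
  dot (u + z *: w) (u + z *: w) =
  dot u u + z * dot u w + conjc z * dot w u + conjc z * z * dot w w.
Proof. by rewrite dotDl !dotDr !dotZl !dotZr !addrA mulrA. Qed.

Lemma Re_dot_sym (u w : V) : Re (dot w u) = Re (dot u w).
Proof. by rewrite -dot_conj ReJ. Qed.

Lemma nn_expand (u w : V) (s : R) :
  nn (u + s%:C *: w) = nn u + 2 * Re (dot u w) * s + nn w * s ^+ 2.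
Proof.
rewrite -Re_dot_self dot_expand conjc_real !ReD -rmorphM !ReRM (Re_dot_sym w u).
rewrite (Re_dot_self u) (Re_dot_self w); ring.
Qed.

Lemma CS (u w : V) : Re (dot u w) <= vnorm u * vnorm w.
Proof.
have h : forall t, 0 <= nn u + 2 * Re (dot u w) * t + nn w * t ^+ 2.
  by move=> t; rewrite -nn_expand nn_ge0.
have {}h := disc (nn_ge0 w) h.
rewrite -sqrtrM ?nn_ge0 //; apply: le_trans (ler_norm _) _.
by rewrite -sqrtr_sqr ler_wsqrtr.
Qed.


Lemma sqrt_le_sq (x y : R) : 0 <= y -> x <= y ^+ 2 -> Num.sqrt x <= y.
Proof.
move=> y0 h; apply: le_trans (ler_wsqrtr h) _.
by rewrite sqrtr_sqr ger0_norm.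
Qed.

Lemma vnormD (u w : V) : vnorm (u + w) <= vnorm u + vnorm w.
Proof.
rewrite vnorm_nn; apply: sqrt_le_sq; first by rewrite addr_ge0 ?vnorm_ge0.
have := nn_expand u w 1; rewrite scale1r => ->.
rewrite sqrrD !vnorm_sq expr1n !mulr1 -mulr_natl; have := CS u w; lra.
Qed.

Lemma nnZ (z : C) (u : V) : nn (z *: u) = normc z ^+ 2 * nn u.
Proof.
rewrite -Re_dot_self dotZl dotZr mulrA conjcM_self dot_self -rmorphM.
by [].
Qed.

Lemma vnormZ (z : C) (u : V) : vnorm (z *: u) = normc z * vnorm u.
Proof.
by rewrite vnorm_nn nnZ sqrtrM ?sqr_ge0 // sqrtr_sqr ger0_norm ?normc_ge0.
Qed.

Lemma vnorm_sum I (r : seq I) (P : pred I) (F : I -> V) :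
  vnorm (\sum_(i <- r | P i) F i) <= \sum_(i <- r | P i) vnorm (F i).
Proof.
elim/big_rec2: _ => [|i y1 y2 _ h]; first by rewrite vnorm0.
by apply: le_trans (vnormD _ _) _; rewrite lerD2l.
Qed.

Lemma entry_le (u : V) i : normc (u i 0) <= vnorm u.
Proof.
rewrite -(ger0_norm (normc_ge0 (u i 0))) -sqrtr_sqr vnorm_nn; apply: ler_wsqrtr.
rewrite /nn (bigD1 i) //= lerDl; apply: sumr_ge0 => j _; exact: sqr_ge0.
Qed.


Lemma normcR (r : R) : normc (r%:C) = `|r|.
Proof. by rewrite /ComplexField.Normc.normc /= expr0n /= addr0 sqrtr_sqr. Qed.

Lemma mx_bound (A : M) : exists K, 0 <= K /\ forall x : V, vnorm (A *m x) <= K * vnorm x.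
Proof.
exists (\sum_i \sum_(j < 1) vnorm (A *m delta_mx i j)); split.
  by apply: sumr_ge0 => i _; apply: sumr_ge0 => j _; exact: vnorm_ge0.
move=> x; rewrite {1}(matrix_sum_delta x) mulmx_sumr.
apply: le_trans (vnorm_sum _ _ _) _; rewrite mulr_suml; apply: ler_sum => i _.
rewrite mulmx_sumr; apply: le_trans (vnorm_sum _ _ _) _; rewrite mulr_suml.
apply: ler_sum => j _; rewrite -scalemxAr vnormZ mulrC.
apply: ler_wpM2l; first exact: vnorm_ge0.
by rewrite ord1; exact: entry_le.
Qed.

Definition Sset (A : M) : set R := [set r : R | exists x : V, vnorm x <= 1 /\ r = vnorm (A *m x)]%classic.

Lemma opnormE (A : M) : opnorm A = sup (Sset A).
Proof. by []. Qed.

Lemma Sset_ne (A : M) : (Sset A !=set0)%classic.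
Proof. by exists 0; exists 0; rewrite vnorm0 mulmx0 vnorm0 ler01. Qed.

Lemma Sset_ub (A : M) : has_ubound (Sset A).
Proof.
have [K [K0 hK]] := mx_bound A; exists K => r [x [hx ->]].
apply: le_trans (hK x) _; rewrite -[leRHS]mulr1; exact: ler_wpM2l.
Qed.

Lemma opnorm_ge0 (A : M) : 0 <= opnorm A.
Proof.
rewrite opnormE; apply: (ub_le_sup (Sset_ub A)).
by exists 0; rewrite vnorm0 mulmx0 vnorm0 ler01.
Qed.

Lemma opnorm_le (A : M) (x : V) : vnorm (A *m x) <= opnorm A * vnorm x.
Proof.
have [vx0|vx_gt0] := eqVneq (vnorm x) 0.
  by rewrite vx0 mulr0 (vnorm_eq0 vx0) mulmx0 vnorm0.
have vxp : 0 < vnorm x by rewrite lt_def vx_gt0 vnorm_ge0.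
have h1 : Sset A (vnorm (A *m ((vnorm x)^-1%:C *: x))).
  exists ((vnorm x)^-1%:C *: x); split => //.
  by rewrite vnormZ normcR ger0_norm ?invr_ge0 ?vnorm_ge0 // mulVf.
have := ub_le_sup (Sset_ub A) h1; rewrite -opnormE -scalemxAr vnormZ normcR.
rewrite ger0_norm ?invr_ge0 ?vnorm_ge0 // => h.
by rewrite -ler_pdivrMr // mulrC.
Qed.

Lemma opnorm_ub (A : M) (c : R) : 0 <= c ->
  (forall x : V, vnorm (A *m x) <= c * vnorm x) -> opnorm A <= c.
Proof.
move=> c0 h; rewrite opnormE; apply: ge_sup; first exact: Sset_ne.
move=> r [x [hx ->]]; apply: le_trans (h x) _.
by rewrite -[leRHS]mulr1; apply: ler_wpM2l.
Qed.

Lemma mx_eq0 (A : M) : (forall x : V, A *m x = 0) -> A = 0.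
Proof.
move=> h; apply/matrixP => i j.
have := congr1 (fun B : V => B i 0) (h (delta_mx j 0)).
by rewrite -colE !mxE.
Qed.


Definition psd (A : M) := forall v : V, 0 <= dot v (A *m v).

Lemma psd_ReIm (A : M) : psd A -> forall v, Im (dot v (A *m v)) = 0 /\ 0 <= Re (dot v (A *m v)).
Proof. by move=> h v; apply/ge0C. Qed.

Lemma dot_eq0 (D : M) : (forall u v : V, dot u (D *m v) = 0) -> D = 0.
Proof.
move=> h; apply: mx_eq0 => v; apply: nn_eq0.
by have := h (D *m v) v; rewrite dot_self => -[].
Qed.

Lemma self_ge0 (u : V) : 0 <= dot u u.
Proof. by rewrite dot_self ler0c nn_ge0. Qed.

Definition o1 : 'I_2 := lift ord0 ord0.

Lemma sum2E (X : 'I_2 -> 'I_2 -> M) (v : 'I_2 -> V) :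
  \sum_(i < 2) \sum_(j < 2) (adjmx (v i) *m X i j *m v j) 0 0 =
  dot (v ord0) (X ord0 ord0 *m v ord0) + dot (v ord0) (X ord0 o1 *m v o1) +
  dot (v o1) (X o1 ord0 *m v ord0) + dot (v o1) (X o1 o1 *m v o1).
Proof.
by rewrite !big_ord_recl !big_ord0 /dot !mulmxA !addr0 !addrA.
Qed.

Lemma sum1E (X : 'I_1 -> 'I_1 -> M) (v : 'I_1 -> V) :
  \sum_(i < 1) \sum_(j < 1) (adjmx (v i) *m X i j *m v j) 0 0 =
  dot (v ord0) (X ord0 ord0 *m v ord0).
Proof. by rewrite !big_ord1 /dot mulmxA. Qed.

Definition blk (P Q Rr S : M) : 'I_2 -> 'I_2 -> M := fun i j =>
  if i == ord0 then (if j == ord0 then P else Q) else (if j == ord0 then Rr else S).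

Definition vv (v0 v1 : V) : 'I_2 -> V := fun i => if i == ord0 then v0 else v1.

Section blkE.
Variables (P Q Rr S : M) (v0 v1 : V).
Lemma blk00 : blk P Q Rr S ord0 ord0 = P. Proof. by []. Qed.
Lemma blk01 : blk P Q Rr S ord0 o1 = Q. Proof. by []. Qed.
Lemma blk10 : blk P Q Rr S o1 ord0 = Rr. Proof. by []. Qed.
Lemma blk11 : blk P Q Rr S o1 o1 = S. Proof. by []. Qed.
Lemma vv0 : vv v0 v1 ord0 = v0. Proof. by []. Qed.
Lemma vv1 : vv v0 v1 o1 = v1. Proof. by []. Qed.
End blkE.

Lemma cp_pos (F : M -> M) : completely_positive F -> forall A, psd A -> psd (F A).
Proof.
move=> cp A hA v.
have hb : block_pos (fun (_ : 'I_1) (_ : 'I_1) => A).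
  by move=> w; rewrite sum1E; apply: hA.
have := cp 1%N _ hb (fun _ => v); rewrite sum1E; exact.
Qed.

Definition Qf (F : M -> M) (x : M) (v0 v1 : V) :=
  dot v0 (F 1%:M *m v0) + dot v0 (F x *m v1) + dot v1 (F (adjmx x) *m v0) +
  dot v1 (F (adjmx x *m x) *m v1).

Lemma cp_Q (F : M -> M) : completely_positive F -> forall x v0 v1, 0 <= Qf F x v0 v1.
Proof.
move=> cp x v0 v1.
have hb : block_pos (blk 1%:M x (adjmx x) (adjmx x *m x)).
  move=> v; rewrite sum2E blk00 blk01 blk10 blk11 mul1mx.
  rewrite (dot_adjr (adjmx x) (v o1) (v ord0)) adjmxK.
  rewrite -mulmxA (dot_adjr (adjmx x) (v o1) (x *m v o1)) adjmxK.
  by have := self_ge0 (v ord0 + x *m v o1); rewrite dotDl !dotDr !addrA.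
have := cp 2%N _ hb (vv v0 v1); rewrite sum2E /= !blk00 !blk01 !blk10 !blk11 !vv0 !vv1.
by [].
Qed.


Lemma schwarz (F : M -> M) : completely_positive F -> F 1%:M = 1%:M ->
  forall x, psd (F (adjmx x *m x) - F (adjmx x) *m F x).
Proof.
move=> cp F1 x w; have := cp_Q cp x (- (F x *m w)) w.
rewrite /Qf F1 mul1mx mulmxBl dotBr -mulmxA dotNl !dotNr opprK mulmxN dotNr.
by rewrite dotNl addrN add0r addrC.
Qed.

Lemma conji : conjc ('i : C) = - 'i.
Proof. by apply: complex_eq => /=; rewrite ?oppr0. Qed.

Lemma herm (F : M -> M) : completely_positive F -> F 1%:M = 1%:M ->
  forall x, F (adjmx x) = adjmx (F x).
Proof.
move=> cp F1 x; apply/eqP; rewrite -subr_eq0; apply/eqP; apply: dot_eq0 => u v.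
have hK : forall u', Im (dot u' (F (adjmx x *m x) *m u')) = 0.
  move=> u'; have := cp_Q cp x 0 u'; rewrite /Qf !dot0l mulmx0 dot0r !add0r.
  by move/ge0C => [].
have h1 := cp_Q cp x v u; rewrite /Qf F1 mul1mx in h1.
move/ge0C: h1 => [+ _]; rewrite !ImD Im_dot_self hK add0r addr0 => h1.
have h2 := cp_Q cp x v ('i *: u); rewrite /Qf F1 mul1mx in h2.
move/ge0C: h2 => [+ _]; rewrite !ImD Im_dot_self hK add0r addr0.
rewrite -scalemxAr dotZr dotZl conji mulNr ImN !Imi => h2.
rewrite mulmxBl dotBr; apply/eqP; rewrite subr_eq0; apply/eqP.
rewrite -dot_adj -[dot (F x *m u) v]dot_conj.
apply: complex_eq; rewrite ?ReJ ?ImJ.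
  by move/eqP: h2; rewrite subr_eq0 => /eqP ->.
by move/eqP: h1; rewrite addrC addr_eq0 => /eqP.
Qed.

Lemma psdT (A : M) : psd (A^T) -> psd A.
Proof.
move=> h v; have := h (map_mx conjc v).
have -> : dot (map_mx conjc v) (A^T *m map_mx conjc v) = dot v (A *m v); last by [].
rewrite !dotE; under eq_bigr => i _ do rewrite !mxE mulr_sumr.
under [RHS]eq_bigr => i _ do rewrite !mxE mulr_sumr.
rewrite [LHS]exchange_big /=; apply: eq_bigr => i _; apply: eq_bigr => j _.
by rewrite !mxE conjcK [A i j * _]mulrC mulrCA [v j 0 * _]mulrC.
Qed.

End Basics.


Section More.
Variable R : realType.
Local Notation C := R[i].
Local Notation Re := (@complex.Re R).
Local Notation Im := (@complex.Im R).
Local Notation normc := (@ComplexField.Normc.normc R).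
Variable n : nat.
Local Notation M := 'M[C]_n.
Local Notation V := 'cV[C]_n.

Lemma polar_C (a b : C) : a + b = 0 -> 'i * a - 'i * b = 0 -> a = 0.
Proof.
move=> h1 h2.
have e1 := congr1 Re h1; have e2 := congr1 Im h1.
have e3 := congr1 Re h2; have e4 := congr1 Im h2.
rewrite ReD /= in e1; rewrite ImD /= in e2.
rewrite ReB !Rei /= in e3; rewrite ImB !Imi /= in e4.
apply: complex_eq => /=; lra.
Qed.

Lemma polar_dot (D : M) : (forall v : V, dot v (D *m v) = 0) -> D = 0.
Proof.
move=> h; apply: dot_eq0 => u v.
have h1 := h (u + v); rewrite mulmxDr dotDl !dotDr in h1. rewrite (h u) (h v) add0r addr0 in h1.
have h2 := h (u + 'i *: v).
rewrite mulmxDr -scalemxAr dotDl !dotDr !dotZl !dotZr (h u) (h v) add0r !mulr0 addr0 in h2.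
rewrite conji mulNr addrC in h2.
by apply: (polar_C h1); rewrite addrC.
Qed.

Lemma psd_anti (D : M) : psd D -> psd (- D) -> D = 0.
Proof.
move=> h1 h2; apply: polar_dot => v; apply/eqP; rewrite eq_le h1 andbT.
by have := h2 v; rewrite mulNmx dotNr oppr_ge0.
Qed.

Lemma sq_le0 (b : R) : b ^+ 2 <= 0 -> b = 0.
Proof. by move=> h; apply/eqP; rewrite -sqrf_eq0 eq_le h sqr_ge0. Qed.

Lemma CEscalar (d k : C) : 0 <= k ->
  (forall t : C, 0 <= t * d + conjc t * conjc d + conjc t * t * k) -> d = 0.
Proof.
move=> /ge0C [_ k0] h.
have hre : forall t : C, 0 <= 2 * Re (t * d) * 1 + Re k * (normc t ^+ 2).
  move=> t; have /ge0C [_] := h t.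
  rewrite -rmorphM /= conjcM_self !ReD ReRM ReJ mulr1; lra.
have e1 : Re d = 0.
  apply: sq_le0; rewrite -(mul0r (Re k)); apply: disc => // s.
  have := hre s%:C; rewrite (ReRM s d) (normc_sq s%:C) /= expr0n addr0; lra.
have e2 : Im d = 0.
  apply/eqP; rewrite -oppr_eq0; apply/eqP.
  apply: sq_le0; rewrite -(mul0r (Re k)); apply: disc => // s.
  have := hre (s%:C * 'i); rewrite -[s%:C * 'i * d]mulrA (ReRM s) (Rei d) (normc_sq (s%:C * 'i)) (ReRM s) (ImRM s) /=.
  rewrite mulr0 mulr1 expr0n add0r; lra.
by apply: complex_eq; rewrite ?e1 ?e2.
Qed.

End More.


Section Main.
Variable R : realType.
Local Notation C := R[i].
Local Notation Re := (@complex.Re R).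
Local Notation Im := (@complex.Im R).
Local Notation normc := (@ComplexField.Normc.normc R).
Variable n : nat.
Local Notation M := 'M[C]_n.
Local Notation V := 'cV[C]_n.
Variable phi : {linear 'M[R[i]]_n -> 'M[R[i]]_n}.
Hypothesis phi1 : phi 1%:M = 1%:M.
Hypothesis ppt : PPT_map phi.
Hypothesis idem : forall A, phi (phi A) = phi A.

Lemma cpP : completely_positive phi. Proof. by case: ppt. Qed.
Lemma cpT : completely_positive (fun A => (phi A)^T). Proof. by case: ppt. Qed.

Lemma posP (A : M) : psd A -> psd (phi A). Proof. exact: cp_pos cpP A. Qed.
Lemma hermP (x : M) : phi (adjmx x) = adjmx (phi x). Proof. exact: herm cpP phi1 x. Qed.
Lemma schP (x : M) : psd (phi (adjmx x *m x) - phi (adjmx x) *m phi x).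
Proof. exact: schwarz cpP phi1 x. Qed.
Lemma phiT1 : (fun A => (phi A)^T) 1%:M = 1%:M. Proof. by rewrite /= phi1 trmx1. Qed.

Lemma adjB (c : M) : phi c = c -> phi (adjmx c) = adjmx c.
Proof. by move=> h; rewrite hermP h. Qed.

Lemma key1 (c : M) : phi c = c -> psd (phi (c *m adjmx c) - adjmx c *m c).
Proof.
move=> h; have := schwarz cpT phiT1 (adjmx c).
rewrite /= adjmxK (adjB h) h -trmx_mul.
have -> : (phi (c *m adjmx c))^T - (adjmx c *m c)^T = (phi (c *m adjmx c) - adjmx c *m c)^T.
  by apply/matrixP => i j; rewrite !mxE.
exact: psdT.
Qed.

Lemma normalB (c : M) : phi c = c -> phi (adjmx c *m c) = phi (c *m adjmx c).
Proof.
move=> h; have h1 := posP (key1 h); rewrite linearB /= idem in h1.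
have h2 := posP (key1 (adjB h)); rewrite adjmxK linearB /= idem in h2.
apply/eqP; rewrite -subr_eq0; apply/eqP; apply: psd_anti => //.
by rewrite opprB.
Qed.


Definition g (x y : M) := phi (adjmx x *m y - y *m adjmx x).

Lemma gDl x1 x2 y : g (x1 + x2) y = g x1 y + g x2 y.
Proof.
rewrite /g adjmxD mulmxDl mulmxDr -linearD /=; congr (phi _).
by rewrite opprD addrACA.
Qed.

Lemma gDr x y1 y2 : g x (y1 + y2) = g x y1 + g x y2.
Proof.
rewrite /g mulmxDl mulmxDr -linearD /=; congr (phi _).
by rewrite opprD addrACA.
Qed.

Lemma gZl (z : C) x y : g (z *: x) y = conjc z *: g x y.
Proof. by rewrite /g adjmxZ -scalemxAl -scalemxAr -scalerBr linearZ. Qed.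

Lemma gZr (z : C) x y : g x (z *: y) = z *: g x y.
Proof. by rewrite /g -scalemxAl -scalemxAr -scalerBr linearZ. Qed.

Lemma gxx x : phi x = x -> g x x = 0.
Proof. by move=> h; rewrite /g linearB /= normalB // subrr. Qed.

Lemma inBD x y : phi x = x -> phi y = y -> phi (x + y) = x + y.
Proof. by move=> hx hy; rewrite linearD /= hx hy. Qed.
Lemma inBZ (z : C) x : phi x = x -> phi (z *: x) = z *: x.
Proof. by move=> hx; rewrite linearZ /= hx. Qed.

Lemma i_neq0 : ('i : C) != 0.
Proof. by apply/eqP => /(congr1 Im) /= /eqP; rewrite oner_eq0. Qed.

Lemma gxy x y : phi x = x -> phi y = y -> g x y = 0.
Proof.
move=> hx hy.
have s1 := gxx (inBD hx hy); rewrite gDl !gDr (gxx hx) (gxx hy) add0r addr0 in s1.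
have s2 := gxx (inBD (inBZ 'i hx) hy).
rewrite gDl !gDr (gxx (inBZ 'i hx)) (gxx hy) add0r addr0 gZl gZr conji in s2.
have e : g y x = - g x y by apply/eqP; rewrite -addr_eq0 addrC s1.
rewrite e scalerN -scaleNr -scalerDl in s2.
have nz : (- 'i + - 'i : C) != 0.
  by rewrite -opprD oppr_eq0 -mulr2n mulrn_eq0 negb_or i_neq0.
by rewrite -[g x y]scale1r -(mulVf nz) -scalerA s2 scaler0.
Qed.

Lemma commB a b : phi a = a -> phi b = b -> phi (a *m b) = phi (b *m a).
Proof.
move=> ha hb; have := gxy (adjB ha) hb; rewrite /g adjmxK linearB /=.
by move/eqP; rewrite subr_eq0 => /eqP.
Qed.

End Main.


Section Main2.
Variable R : realType.
Local Notation C := R[i].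
Local Notation Re := (@complex.Re R).
Local Notation Im := (@complex.Im R).
Local Notation normc := (@ComplexField.Normc.normc R).
Variable n : nat.
Local Notation M := 'M[C]_n.
Local Notation V := 'cV[C]_n.
Variable phi : {linear 'M[R[i]]_n -> 'M[R[i]]_n}.
Hypothesis phi1 : phi 1%:M = 1%:M.
Hypothesis ppt : PPT_map phi.
Hypothesis idem : forall A, phi (phi A) = phi A.

Local Notation posP := (posP ppt).
Local Notation hermP := (hermP phi1 ppt).
Local Notation schP := (schP phi1 ppt).
Local Notation adjB := (adjB phi1 ppt).

Lemma psd_adjself (w : M) : psd (adjmx w *m w).
Proof.
by move=> v; rewrite -mulmxA (dot_adjr (adjmx w)) adjmxK; exact: self_ge0.
Qed.

Lemma CE0 (c w : M) : phi c = c -> phi w = 0 -> phi (c *m w) = 0.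
Proof.
move=> hc hw.
set D := phi (c *m w); set K := phi (adjmx w *m w).
have Kp : psd K by apply: posP; exact: psd_adjself.
have main : forall t : C, psd (t *: D + conjc t *: adjmx D + (conjc t * t) *: K).
  move=> t; set x := adjmx c + t *: w.
  have ex : adjmx x = c + conjc t *: adjmx w by rewrite adjmxD adjmxK adjmxZ.
  have hx1 : phi (adjmx x) = c by rewrite ex linearD linearZ /= hermP hw adjmx0 scaler0 addr0.
  have hx2 : phi x = adjmx c by rewrite linearD linearZ /= hw scaler0 addr0 (adjB hc).
  have hxx : phi (adjmx x *m x) = phi (c *m adjmx c) +
       (t *: D + conjc t *: adjmx D + (conjc t * t) *: K).
    rewrite ex /x mulmxDl !mulmxDr -!scalemxAl -!scalemxAr scalerA !linearD !linearZ /=.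
    by rewrite -adjmxM hermP -/D -/K !addrA.
  set E := t *: D + _ + _ in hxx *.
  have hE : phi E = E by rewrite /E !linearD !linearZ /= hermP /D /K !idem.
  have := posP (schP x); rewrite hx1 hx2 hxx linearB linearD /= idem hE.
  by rewrite addrC addKr.
apply: polar_dot => v.
apply: (@CEscalar _ _ (dot v (K *m v)) (Kp v)) => t.
have := main t v; rewrite !mulmxDl !dotDr -!scalemxAl !dotZr.
by rewrite -dot_adj -[dot (D *m v) v]dot_conj.
Qed.

Lemma CE_R (c y : M) : phi c = c -> phi (c *m y) = phi (c *m phi y).
Proof.
move=> hc; apply/eqP; rewrite -subr_eq0 -linearB -mulmxBr; apply/eqP.
by apply: CE0 => //; rewrite linearB /= idem subrr.
Qed.

Lemma CE_L (c y : M) : phi c = c -> phi (y *m c) = phi (phi y *m c).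
Proof.
move=> hc; apply: adjmx_inj; rewrite -!hermP !adjmxM (CE_R _ (adjB hc)).
by rewrite hermP.
Qed.

Lemma assocB (a b c : M) : phi a = a -> phi b = b -> phi c = c ->
  phi (phi (a *m b) *m c) = phi (a *m phi (b *m c)).
Proof.
by move=> ha hb hc; rewrite -(CE_L _ hc) -(CE_R _ ha) mulmxA.
Qed.

End Main2.


Section Main3.
Variable R : realType.
Local Notation C := R[i].
Local Notation Re := (@complex.Re R).
Local Notation Im := (@complex.Im R).
Local Notation normc := (@ComplexField.Normc.normc R).
Variable n : nat.
Local Notation M := 'M[C]_n.
Local Notation V := 'cV[C]_n.
Variable phi : {linear 'M[R[i]]_n -> 'M[R[i]]_n}.
Hypothesis phi1 : phi 1%:M = 1%:M.
Hypothesis ppt : PPT_map phi.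
Hypothesis idem : forall A, phi (phi A) = phi A.

Local Notation posP := (posP ppt).
Local Notation hermP := (hermP phi1 ppt).
Local Notation schP := (schP phi1 ppt).
Local Notation adjB := (adjB phi1 ppt).

Lemma mul_le (A B : M) : opnorm (A *m B) <= opnorm A * opnorm B.
Proof.
apply: opnorm_ub; first by rewrite mulr_ge0 ?opnorm_ge0.
move=> x; rewrite -mulmxA; apply: le_trans (opnorm_le A _) _.
by rewrite -mulrA; apply: ler_wpM2l; [exact: opnorm_ge0 | exact: opnorm_le].
Qed.

Lemma adj_le (a : M) : opnorm (adjmx a) <= opnorm a.
Proof.
apply: (opnorm_ub (opnorm_ge0 a)) => y.
have p0 := vnorm_ge0 (adjmx a *m y).
have h : vnorm (adjmx a *m y) ^+ 2 <= vnorm y * (opnorm a * vnorm (adjmx a *m y)).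
  rewrite vnorm_sq -Re_dot_self dot_adj adjmxK.
  apply: le_trans (CS _ _) _; apply: ler_wpM2l; [exact: vnorm_ge0 | exact: opnorm_le].
have y0 := vnorm_ge0 y; have a0 := opnorm_ge0 a.
move: h p0; set p := vnorm (adjmx a *m y) => h p0.
have [->|pn0] := eqVneq p 0; first by rewrite mulr_ge0.
have pp : 0 < p by rewrite lt_def pn0 p0.
rewrite -(ler_pM2r pp) -expr2; apply: le_trans h _.
by rewrite mulrA (mulrC (vnorm y)).
Qed.

Lemma contr (y : M) : opnorm (phi y) <= opnorm y.
Proof.
apply: (opnorm_ub (opnorm_ge0 y)) => x.
set L := opnorm y ^+ 2.
have hpsd : psd ((L%:C)%:M - adjmx y *m y).
  move=> v; rewrite mulmxBl dotBr mul_scalar_mx dotZr -mulmxA.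
  rewrite (dot_adjr (adjmx y)) adjmxK !dot_self -rmorphM -rmorphB ler0c subr_ge0.
  rewrite -!vnorm_sq /L; have := opnorm_le y v; have := vnorm_ge0 (y *m v).
  have := vnorm_ge0 v; have := opnorm_ge0 y; nra.
have h1 := posP hpsd.
rewrite linearB /= -[(L%:C)%:M]scalemx1 linearZ /= phi1 scalemx1 in h1.
have h2 := schP y; rewrite hermP in h2.
have [_] := (ge0C _).1 (h1 x); have [_] := (ge0C _).1 (h2 x).
rewrite !mulmxBl !dotBr !ReB mul_scalar_mx dotZr -mulmxA (dot_adjr (adjmx (phi y))) adjmxK.
rewrite (ReRM L) !Re_dot_self => e2 e1.
rewrite vnorm_nn; apply: sqrt_le_sq; first by rewrite mulr_ge0 ?opnorm_ge0 ?vnorm_ge0.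
rewrite exprMn vnorm_sq -/L; lra.
Qed.

Lemma Cstar_le (a : M) : opnorm (phi (adjmx a *m a)) <= opnorm a ^+ 2.
Proof.
apply: le_trans (contr _) _; apply: le_trans (mul_le _ _) _.
by rewrite expr2; apply: ler_wpM2r; [exact: opnorm_ge0 | exact: adj_le].
Qed.

Lemma Cstar_ge (a : M) : phi a = a -> opnorm a ^+ 2 <= opnorm (phi (adjmx a *m a)).
Proof.
move=> ha; set N := opnorm (phi (adjmx a *m a)).
have N0 : 0 <= N := opnorm_ge0 _.
have h : opnorm a <= Num.sqrt N.
  apply: (opnorm_ub (sqrtr_ge0 N)) => x.
  rewrite vnorm_nn; apply: sqrt_le_sq; first by rewrite mulr_ge0 ?sqrtr_ge0 ?vnorm_ge0.
  have h := schP a; rewrite (adjB ha) ha in h.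
  have [_] := (ge0C _).1 (h x); rewrite mulmxBl dotBr ReB -mulmxA (dot_adjr (adjmx a)) adjmxK.
  rewrite Re_dot_self => e1.
  have e2 := CS x (phi (adjmx a *m a) *m x).
  have e3 := opnorm_le (phi (adjmx a *m a)) x; rewrite -/N in e3.
  rewrite exprMn sqr_sqrtr // vnorm_sq -/N.
  have e4 : vnorm x * vnorm (phi (adjmx a *m a) *m x) <= vnorm x * (N * vnorm x).
    by apply: ler_wpM2l; [exact: vnorm_ge0 | exact: e3].
  have e5 : vnorm x * (N * vnorm x) = N * nn x by rewrite mulrCA -vnorm_sq expr2.
  lra.
have := opnorm_ge0 a; have := sqr_sqrtr N0; nra.
Qed.

End Main3.


Section Gen.
Variable R : realType.
Local Notation C := R[i].
Local Notation Re := (@complex.Re R).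
Local Notation Im := (@complex.Im R).
Local Notation normc := (@ComplexField.Normc.normc R).
Variable n : nat.
Local Notation M := 'M[C]_n.
Local Notation V := 'cV[C]_n.

Lemma opnormD (a b : M) : opnorm (a + b) <= opnorm a + opnorm b.
Proof.
apply: opnorm_ub; first by rewrite addr_ge0 ?opnorm_ge0.
move=> x; rewrite mulmxDl; apply: le_trans (vnormD _ _) _.
by rewrite mulrDl lerD ?opnorm_le.
Qed.

Lemma opnorm_eq0 (a : M) : opnorm a = 0 -> a = 0.
Proof.
move=> h; apply: mx_eq0 => x; apply: vnorm_eq0; apply/eqP.
by rewrite eq_le vnorm_ge0 andbT; have := opnorm_le a x; rewrite h mul0r.
Qed.

Lemma opnormZ (z : C) (a : M) : opnorm (z *: a) = normc z * opnorm a.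
Proof.
apply/eqP; rewrite eq_le; apply/andP; split.
  apply: opnorm_ub; first by rewrite mulr_ge0 ?normc_ge0 ?opnorm_ge0.
  move=> x; rewrite -scalemxAl vnormZ -mulrA; apply: ler_wpM2l; first exact: normc_ge0.
  exact: opnorm_le.
have [->|zn0] := eqVneq z 0.
  by rewrite ComplexField.Normc.normc0 mul0r opnorm_ge0.
have : opnorm a <= normc z^-1 * opnorm (z *: a).
  apply: opnorm_ub; first by rewrite mulr_ge0 ?normc_ge0 ?opnorm_ge0.
  move=> x; have -> : a *m x = z^-1 *: ((z *: a) *m x).
    by rewrite -scalemxAl scalerA mulVf // scale1r.
  rewrite vnormZ -mulrA; apply: ler_wpM2l.
    exact: normc_ge0.
  exact: opnorm_le.
rewrite ComplexField.Normc.normcV.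
have nz : 0 < normc z.
  rewrite lt_def normc_ge0 andbT; apply/eqP => /ComplexField.Normc.eq0_normc.
  by apply/eqP.
by rewrite -(ler_pM2l nz) mulrA mulfV ?gt_eqF // mul1r.
Qed.

End Gen.

Local Close Scope complex_scope.
Unset Implicit Arguments.
Set Strict Implicit.

Theorem mainTheorem4 (R : realType) (n : nat)
    (phi : {linear 'M[R[i]]_n -> 'M[R[i]]_n}) :
  phi 1%:M = 1%:M ->
  PPT_map phi ->
  (forall A, phi (phi A) = phi A) ->
  let S := fun a : 'M[R[i]]_n => exists A, a = phi A in
  is_Cstar_algebra S (fun a b => phi (a *m b)) (@adjmx R n n) (@opnorm R n) /\
  is_abelian S (fun a b => phi (a *m b)).
Proof.
move=> p1 ppt idem S.
have SP : forall a, S a <-> phi a = a.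
  move=> a; split; first by case=> A ->; rewrite idem.
  by move=> h; exists a; rewrite h.
split; last first.
  by move=> a b /SP ha /SP hb; apply: commB.
split.
  split.
  - by exists 0; rewrite linear0.
  - by move=> a b /SP ha /SP hb; apply/SP; apply: inBD.
  - by move=> z a /SP ha; apply/SP; apply: inBZ.
split.
  split.
  - by move=> a b _ _; exists (a *m b).
  - by move=> a b c /SP ha /SP hb /SP hc; apply: assocB.
  - by move=> a b c _ _ _; rewrite mulmxDr linearD.
  - by move=> a b c _ _ _; rewrite mulmxDl linearD.
  - by move=> z a b _ _; rewrite -scalemxAl -scalemxAr !linearZ.
split.
  split.
  - by move=> a /SP ha; apply/SP; apply: adjB.
  - by move=> a _; rewrite adjmxK.
  - by move=> a b _ _; rewrite adjmxD.
  - by move=> z a _; rewrite adjmxZ.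
  - by move=> a b _ _; rewrite -(hermP p1 ppt) adjmxM.
split.
- by move=> a _; exact: opnorm_ge0.
- by move=> a _; exact: opnorm_eq0.
- by move=> a b _ _; exact: opnormD.
- by move=> z a _; exact: opnormZ.
split.
  move=> a b _ _; apply: le_trans (contr _ _ _) _ => //; exact: mul_le.
move=> a /SP ha; apply/eqP; rewrite eq_le; apply/andP; split.
  exact: Cstar_le.
exact: Cstar_ge.
Qed.
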